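(* Let $\alpha\in(0,1]$, $b>0$, $p>\max(1/\alpha,b/\alpha)$, $H,K\ge0$ and $n\ge1$. Let $\Upsilon_0,\dots,\Upsilon_n$ be real random variables such that for all $0\le i\le j\le n$, \[ \mathbb E(|\Upsilon_j-\Upsilon_i|^p)\le H(j-i)^{\alpha p}+K(j-i)^b. \] Then for every $\gamma$ with $\max(1,b)<\gamma<\alpha p$ there is a constant $c=c(\alpha,\gamma,p,b)>0$ (depending only on $\alpha,\gamma,p,b$) such that \[ \mathbb E\Big(\max_{0\le i\le j\le n}|\Upsilon_j-\Upsilon_i|^p\Big)\le c\big(Hn^{\alpha p}+Kn^\gamma\big). \] In particular, if $\Upsilon_0=0$ then $\mathbb E(\max_{0\le i\le n}|\Upsilon_i|^p)\le c(Hn^{\alpha p}+Kn^\gamma)$. *)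

(* Defs.v *)
From HB Require Import structures.
From mathcomp Require Import all_boot all_order all_algebra.
From mathcomp Require Import all_classical all_reals all_analysis.
Set Implicit Arguments. Unset Strict Implicit. Unset Printing Implicit Defensive.
Import Order.TTheory GRing.Theory Num.Theory.
Local Open Scope ring_scope.

(* max_{0<=i<=j<=n} |Y j x - Y i x|^p  (all terms are >= 0, so 0 is a valid
   neutral element for the max) *)
Definition maxincr_pow (R : realType) (T : Type) (Y : nat -> T -> R)
  (n : nat) (p : R) (x : T) : R :=
  \big[Num.max/0]_(i < n.+1) \big[Num.max/0]_(j < n.+1 | (i <= j)%N)
     (`|Y j x - Y i x| `^ p).

Definition max_pow (R : realType) (T : Type) (Y : nat -> T -> R)
  (n : nat) (p : R) (x : T) : R :=
  \big[Num.max/0]_(i < n.+1) (`|Y i x| `^ p).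

(* Main.v *)
Require Import Defs.
From HB Require Import structures.
From mathcomp Require Import all_boot all_order all_algebra.
From mathcomp Require Import all_classical all_reals all_analysis.
From mathcomp Require Import zify ring lra measurable_realfun.
Import Order.TTheory GRing.Theory Num.Theory.
Local Open Scope ring_scope.
Section RealPart.
Variable R : realType.

Lemma le_bigmax_seq (I : eqType) (r : seq I) (F : I -> R) m :
  m \in r -> F m <= \big[Num.max/0]_(i <- r) F i.
Proof.
elim: r => [//|a r IH]; rewrite in_cons big_cons => /orP[/eqP->|/IH H].
  by rewrite le_max lexx.
by rewrite le_max H orbT.
Qed.

Lemma bigmax_ge0 (I : Type) (r : seq I) (P : pred I) (F : I -> R) :
  0 <= \big[Num.max/0]_(i <- r | P i) F i.
Proof.
elim: r => [|a r IH]; first by rewrite big_nil.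
by rewrite big_cons; case: (P a) => //; rewrite le_max IH orbT.
Qed.

Lemma bigmax_le (I : Type) (r : seq I) (P : pred I) (F : I -> R) z :
  0 <= z -> (forall i, P i -> F i <= z) -> \big[Num.max/0]_(i <- r | P i) F i <= z.
Proof.
move=> z0 Fz; apply: (big_ind (fun v => v <= z)) => //.
by move=> x y xz yz; rewrite ge_max xz yz.
Qed.

Lemma powR_max_le (I : Type) (r : seq I) (F : I -> R) (p : R) :
  0 < p -> (forall i, 0 <= F i) ->
  (\big[Num.max/0]_(i <- r) F i) `^ p <= \sum_(i <- r) (F i) `^ p.
Proof.
move=> p0 F0; elim: r => [|a r IH].
  by rewrite !big_nil powR0 // gt_eqF.
rewrite !big_cons.
have M0 : 0 <= \big[Num.max/0]_(i <- r) F i by apply: bigmax_ge0.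
have [aM|aM] := leP (F a) (\big[Num.max/0]_(i <- r) F i).
  by apply: (le_trans IH); rewrite lerDr powR_ge0.
by rewrite lerDl; apply: sumr_ge0 => i _; rewrite powR_ge0.
Qed.

Definition lvl (g : nat -> R) (L j : nat) : R :=
  \big[Num.max/0]_(0 <= m < 2 ^ j)
     `|g (m.+1 * 2 ^ (L - j))%N - g (m * 2 ^ (L - j))%N|.

Lemma lvl_ge0 g L j : 0 <= lvl g L j.
Proof. exact: bigmax_ge0. Qed.

Lemma chain (g : nat -> R) L t : (t <= 2 ^ L)%N ->
  `|g t - g 0%N| <= \sum_(0 <= j < L.+1) lvl g L j.
Proof.
elim: L g t => [|L IH] g t ht.
  rewrite big_nat1 /lvl /index_iota /= big_cons big_nil.
  have : (t = 0 \/ t = 1)%N by rewrite expn0 in ht; lia.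
  case=> ->; first by rewrite subrr normr0 le_max lexx orbT.
  by rewrite le_max lexx.
rewrite big_nat_recr //=.
have ht2 : (t./2 <= 2 ^ L)%N by rewrite expnS in ht; rewrite -divn2; lia.
pose h u := g (2 * u)%N.
have E : \sum_(0 <= j < L.+1) lvl h L j = \sum_(0 <= j < L.+1) lvl g L.+1 j.
  rewrite big_nat_cond [RHS]big_nat_cond; apply: eq_bigr => j /andP[/andP[_ jL] _].
  apply: eq_bigr => m _; rewrite /h subSn // expnS.
  by rewrite !mulnA [(2 * m.+1)%N]mulnC [(2 * m)%N]mulnC.
have := IH h t./2 ht2; rewrite E /h muln0 => H1.
apply: (le_trans (ler_distD (g (2 * t./2)%N) _ _)).
rewrite addrC; apply: lerD => //.
rewrite mul2n.
have Ht := odd_double_half t; case: (odd t) Ht => /= Ht; last first.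
  by rewrite add0n in Ht; rewrite Ht subrr normr0 lvl_ge0.
rewrite -{1}Ht /lvl subnn expn0.
have := @le_bigmax_seq _ (index_iota 0 (2 ^ L.+1))
  (fun m => `|g (m.+1 * 1)%N - g (m * 1)%N|) (t./2.*2).
rewrite !muln1 add1n; apply.
rewrite mem_index_iota; move: ht; rewrite -Ht expnS; lia.
Qed.

Lemma pow_sum_weight (p : R) (r : seq nat) (d w : nat -> R) :
  0 < p -> (forall j, 0 <= d j) -> (forall j, 0 < w j) ->
  (\sum_(j <- r) d j) `^ p
    <= (\sum_(j <- r) w j) `^ p * \sum_(j <- r) (d j / w j) `^ p.
Proof.
move=> p0 d0 w0.
set M := \big[Num.max/0]_(j <- r) (d j / w j).
have H1 : \sum_(j <- r) d j <= (\sum_(j <- r) w j) * M.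
  rewrite mulr_suml big_seq [X in _ <= X]big_seq; apply: ler_sum => j jr.
  have wn0 : w j != 0 by rewrite gt_eqF.
  rewrite -{1}(divfK wn0 (d j)) mulrC.
  apply: ler_wpM2l; first exact: ltW.
  exact: (@le_bigmax_seq _ r (fun j => d j / w j)).
have S0 : 0 <= \sum_(j <- r) d j by apply: sumr_ge0.
have W0 : 0 <= \sum_(j <- r) w j by apply: sumr_ge0 => j _; exact: ltW.
have M0 : 0 <= M by apply: bigmax_ge0.
apply: (le_trans (ge0_ler_powR (ltW p0) _ _ H1)); rewrite ?nnegrE ?mulr_ge0 //.
rewrite powRM //; apply: ler_wpM2l; first exact: powR_ge0.
apply: powR_max_le => // j; apply: divr_ge0 => //; exact: ltW.
Qed.

Lemma powR_exprn (x : R) n p : 0 <= x -> (x ^+ n) `^ p = (x `^ p) ^+ n.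
Proof.
move=> x0; elim: n => [|n IH]; first by rewrite !expr0 powR1.
by rewrite !exprS powRM ?exprn_ge0 // IH.
Qed.

Lemma powR_invr (x : R) p : 0 < x -> (x ^-1) `^ p = (x `^ p) ^-1.
Proof.
move=> x0; rewrite -powR_inv1 ?(ltW x0) // -powRrM mulN1r powRN //.
Qed.

Lemma geo_le (q : R) L : 0 <= q -> q < 1 ->
  \sum_(0 <= k < L.+1) q ^+ k <= (1 - q)^-1.
Proof.
move=> q0 q1; have q1' : 0 < 1 - q by rewrite subr_gt0.
elim: L => [|L IH].
  by rewrite big_nat1 expr0 invf_ge1 // lerBlDr lerDl.
rewrite big_nat_recl // expr0.
under eq_bigr do rewrite exprS; rewrite -mulr_sumr.
apply: (le_trans (lerD (lexx 1) (ler_wpM2l q0 IH))).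
rewrite le_eqVlt; apply/orP; left; apply/eqP; field.
by rewrite gt_eqF.
Qed.

Lemma pointwise (g : nat -> R) L (p q : R) i j :
  0 < p -> 0 < q -> q < 1 -> (i <= 2 ^ L)%N -> (j <= 2 ^ L)%N ->
  `|g j - g i| `^ p <= (2 / (1 - q)) `^ p *
     \sum_(0 <= k < L.+1) ((q `^ p) ^+ k)^-1 *
       \sum_(0 <= m < 2 ^ k)
          `|g (m.+1 * 2 ^ (L - k))%N - g (m * 2 ^ (L - k))%N| `^ p.
Proof.
move=> p0 q0 q1 hi hj.
set S := \sum_(0 <= k < L.+1) lvl g L k.
have S0 : 0 <= S by apply: sumr_ge0 => k _; exact: lvl_ge0.
have H1 : `|g j - g i| <= 2 * S.
  apply: (le_trans (ler_distD (g 0%N) _ _)); rewrite mulr2n mulrDl mul1r.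
  by apply: lerD; [exact: chain | rewrite distrC; exact: chain].
apply: (le_trans (ge0_ler_powR (ltW p0) _ _ H1)); rewrite ?nnegrE ?mulr_ge0 //.
have q1' : 0 < 1 - q by rewrite subr_gt0.
have qi0 : 0 <= (1 - q)^-1 by rewrite invr_ge0 ltW.
rewrite powRM // powRM // -mulrA; apply: ler_wpM2l; first exact: powR_ge0.
have H2 := @pow_sum_weight p (index_iota 0 L.+1) (lvl g L) (fun k => q ^+ k) p0
  (lvl_ge0 g L) (fun k => exprn_gt0 k q0).
apply: (le_trans H2); apply: ler_pM.
- exact: powR_ge0.
- by apply: sumr_ge0 => k _; exact: powR_ge0.
- apply: (ge0_ler_powR (ltW p0)); rewrite ?nnegrE //.
    by apply: sumr_ge0 => k _; rewrite exprn_ge0 // ltW.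
  exact: geo_le (ltW q0) q1.
apply: ler_sum => k _.
rewrite powRM ?lvl_ge0 // ?invr_ge0 ?exprn_ge0 // ?(ltW q0) //.
rewrite powR_invr ?exprn_gt0 // powR_exprn ?(ltW q0) // mulrC.
apply: ler_wpM2l; first by rewrite invr_ge0 exprn_ge0 // powR_ge0.
by apply: powR_max_le => // m.
Qed.

Lemma final_ineq (H K Q s a e : R) L : 0 <= H -> 0 <= K -> 0 < Q -> 0 <= s ->
  0 <= a -> a <= e -> Q * s * a = 2 ->
  \sum_(0 <= k < L.+1) (Q ^+ k)^-1 * ((H * e ^+ (L - k) + K * a ^+ (L - k)) *+ 2 ^ k)
   <= (\sum_(0 <= k < L.+1) s ^+ k) * (H * e ^+ L + K * a ^+ L).
Proof.
move=> H0 K0 Q0 s0 a0 ae Qsa.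
rewrite mulr_suml big_nat_cond [X in _ <= X]big_nat_cond.
apply: ler_sum => k /andP[/andP[_ kL] _].
have E2 : (2 ^ k)%:R = Q ^+ k * s ^+ k * a ^+ k :> R by rewrite natrX -!exprMn Qsa.
have Qk : Q ^+ k != 0 by rewrite gt_eqF // exprn_gt0.
rewrite -mulr_natr E2.
set B := H * e ^+ (L - k) + K * a ^+ (L - k).
have -> : (Q ^+ k)^-1 * (B * (Q ^+ k * s ^+ k * a ^+ k)) = s ^+ k * (a ^+ k * B).
  by field.
apply: ler_wpM2l; first exact: exprn_ge0.
have eL : (L = k + (L - k))%N by lia.
rewrite /B mulrDr; apply: lerD.
  rewrite mulrCA; apply: ler_wpM2l => //; rewrite [in X in _ <= X]eL exprD.
  apply: ler_wpM2r; first by rewrite exprn_ge0 // (le_trans a0).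
  by apply: lerXn2r; rewrite ?nnegrE // (le_trans a0).
by rewrite mulrCA -exprD -eL.
Qed.

End RealPart.

Section MeasPart.
Local Open Scope ereal_scope.
Context (R : realType) (d : measure_display) (T : measurableType d)
  (P : probability T R).
Variables (Y : nat -> T -> R) (n : nat) (p : R).
Hypothesis mY : forall i, (i <= n)%N -> measurable_fun setT (Y i).

Lemma meas_bigmax (I : Type) (r : seq I) (Pr : pred I) (F : I -> T -> R) :
  (forall i, measurable_fun setT (F i)) ->
  measurable_fun setT (fun x => \big[Num.max/0%R]_(i <- r | Pr i) F i x).
Proof.
move=> mF; elim: r => [|a r IH].
  under eq_fun do rewrite big_nil; exact: measurable_cst.
under eq_fun do rewrite big_cons.
case: (Pr a) => //; exact: measurable_maxr.
Qed.

Lemma meas_incr i j : (i <= n)%N -> (j <= n)%N ->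
  measurable_fun setT (fun x => (`|Y j x - Y i x| `^ p)%R).
Proof.
move=> hi hj.
apply: (@measurableT_comp _ _ _ _ _ _ (fun r : R => (r `^ p)%R)); first exact: measurable_powR.
apply: (@measurableT_comp _ _ _ _ _ _ (fun r : R => `|r|%R)); first exact: normr_measurable.
by apply: measurable_funB; apply: mY.
Qed.

Definition Fk (L k m : nat) (x : T) : R :=
  (`|Y (minn (m.+1 * 2 ^ (L - k)) n) x - Y (minn (m * 2 ^ (L - k)) n) x| `^ p)%R.

Lemma mFk L k m : measurable_fun setT (Fk L k m).
Proof. by apply: meas_incr; apply: geq_minr. Qed.

Definition Zf (C0 Q : R) L x : R := (C0 * \sum_(0 <= k < L.+1) (Q ^+ k)^-1 *
  \sum_(0 <= m < 2 ^ k) Fk L k m x)%R.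

Lemma int_Z C0 Q L : (0 <= C0)%R -> (0 < Q)%R ->
  \int[P]_x (Zf C0 Q L x)%:E = \sum_(k <- index_iota 0 L.+1)
     \sum_(m <- index_iota 0 (2 ^ k)) (C0 * (Q ^+ k)^-1)%:E * \int[P]_x (Fk L k m x)%:E.
Proof.
move=> C00 Q0.
have Ck0 k : (0 <= C0 * (Q ^+ k)^-1)%R by rewrite mulr_ge0 // invr_ge0 exprn_ge0 // ltW.
have F0 L' k m x : (0 <= Fk L' k m x)%R by apply: powR_ge0.
transitivity (\int[P]_x (\sum_(k <- index_iota 0 L.+1)
     \sum_(m <- index_iota 0 (2 ^ k)) ((C0 * (Q ^+ k)^-1)%:E * (Fk L k m x)%:E))).
  apply: eq_integral => x _; rewrite /Zf mulr_sumr -sumEFin; apply: eq_bigr => k _.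
  by rewrite mulrA mulr_sumr -sumEFin; apply: eq_bigr => m _; rewrite EFinM.
rewrite ge0_integral_sum //; last 2 first.
- move=> k; apply: emeasurable_sum => m; apply: emeasurable_funM => //.
  by apply/measurable_EFinP; exact: mFk.
- by move=> k x _; apply: sume_ge0 => m _; rewrite -EFinM lee_fin mulr_ge0.
apply: eq_bigr => k _.
rewrite ge0_integral_sum //; last 2 first.
- move=> m; apply: emeasurable_funM => //.
  by apply/measurable_EFinP; exact: mFk.
- by move=> m x _; rewrite -EFinM lee_fin mulr_ge0.
apply: eq_bigr => m _.
rewrite ge0_integralZl_EFin //.
- by move=> x _; rewrite lee_fin.
- by apply/measurable_EFinP; exact: mFk.
Qed.

Lemma int_Z_bound (H K alpha b gamma C0 Q : R) L :
  (0 <= C0)%R -> (0 < Q)%R -> (0 <= H)%R -> (0 <= K)%R -> (0 <= alpha * p)%R ->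
  (0 <= b)%R -> (b <= gamma)%R ->
  (forall i j, (i <= j)%N -> (j <= n)%N ->
         \int[P]_x (`|Y j x - Y i x| `^ p)%:E
           <= (H * (j - i)%:R `^ (alpha * p) + K * (j - i)%:R `^ b)%:E) ->
  \int[P]_x (Zf C0 Q L x)%:E <= (C0 * \sum_(0 <= k < L.+1) (Q ^+ k)^-1 *
     ((H * (2 `^ (alpha * p)) ^+ (L - k) + K * (2 `^ gamma) ^+ (L - k)) *+ 2 ^ k))%:E.
Proof.
move=> C00 Q0 H0 K0 ap0 b0 bg hyp.
rewrite int_Z // mulr_sumr -sumEFin; apply: lee_sum => k _.
set B := (H * _ + _)%R.
have -> : (B *+ 2 ^ k = \sum_(0 <= m < 2 ^ k) B)%R by rewrite sumr_const_nat subn0.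
rewrite mulrA mulr_sumr -sumEFin; apply: lee_sum => m _.
rewrite [X in _ <= X]EFinM; apply: lee_wpmul2l.
  by rewrite lee_fin mulr_ge0 // invr_ge0 exprn_ge0 // ltW.
set l := (2 ^ (L - k))%N.
have hl : (0 < l)%N by rewrite expn_gt0.
have hij : (minn (m * l) n <= minn (m.+1 * l) n)%N.
  by rewrite mulSn; move: (m * l)%N => z; lia.
apply: (le_trans (hyp _ _ hij (geq_minr _ _))).
rewrite lee_fin /B.
have hd : ((minn (m.+1 * l) n - minn (m * l) n)%:R <= l%:R :> R)%R.
  by rewrite ler_nat mulSn; move: (m * l)%N => z; lia.
have l1 : (1 <= l%:R :> R)%R by rewrite ler1n.
have lE r : (l%:R `^ r = (2 `^ r) ^+ (L - k) :> R)%R.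
  by rewrite /l natrX powR_exprn.
apply: lerD; apply: ler_wpM2l => //; rewrite -lE.
  by apply: (ge0_ler_powR ap0) => //; rewrite nnegrE.
apply: (le_trans _ (ler_powR l1 bg)).
by apply: (ge0_ler_powR b0) => //; rewrite nnegrE.
Qed.

End MeasPart.

Local Open Scope ereal_scope.

Theorem lemma3p5 (R : realType) (alpha b p gamma : R) :
  (0 < alpha)%R -> (alpha <= 1)%R -> (0 < b)%R ->
  (Num.max (1 / alpha) (b / alpha) < p)%R ->
  (Num.max 1 b < gamma)%R -> (gamma < alpha * p)%R ->
  exists c : R, (0 < c)%R /\
    forall (d : measure_display) (T : measurableType d)
           (P : probability T R) (H K : R) (n : nat) (Y : nat -> T -> R),
      (0 <= H)%R -> (0 <= K)%R -> (1 <= n)%N ->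
      (forall i, (i <= n)%N -> measurable_fun setT (Y i)) ->
      (forall i j, (i <= j)%N -> (j <= n)%N ->
         \int[P]_x (`|Y j x - Y i x| `^ p)%:E
           <= (H * (j - i)%:R `^ (alpha * p) + K * (j - i)%:R `^ b)%:E) ->
      \int[P]_x (maxincr_pow Y n p x)%:E
        <= (c * (H * n%:R `^ (alpha * p) + K * n%:R `^ gamma))%:E
      /\ ((forall x, Y 0%N x = 0%R) ->
          \int[P]_x (max_pow Y n p x)%:E
            <= (c * (H * n%:R `^ (alpha * p) + K * n%:R `^ gamma))%:E).
Proof.
move=> a0 a1 b0; rewrite gt_max => /andP[hp1 _]; rewrite gt_max => /andP[g1 bg] gap.
have ia0 : (0 < 1 / alpha)%R by rewrite divr_gt0.
have p0 : (0 < p)%R by apply: lt_trans hp1.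
set a := (2 `^ gamma)%R; set e := (2 `^ (alpha * p))%R.
have a2 : (2 < a)%R.
  rewrite /a /powR; have -> : ((2:R) == 0)%R = false by rewrite pnatr_eq0.
  rewrite -{1}(@lnK _ 2%R) ?posrE //.
  by rewrite ltr_expR -{1}(mul1r (ln 2)) ltr_pM2r // ln_gt0 // ltr1n.
have a0' : (0 < a)%R by apply: lt_trans a2.
have ae : (a <= e)%R by apply: ler_powR; [rewrite ler1n | exact: ltW].
set beta := (2 / a)%R.
have be0 : (0 < beta)%R by rewrite divr_gt0.
have be1 : (beta < 1)%R by rewrite ltr_pdivrMr // mul1r.
set s := ((1 + beta) / 2)%R.
have s0 : (0 < s)%R by rewrite /s; lra.
have s1 : (s < 1)%R by rewrite /s; lra.
have bes : (beta < s)%R by rewrite /s; lra.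
set Q := (beta / s)%R.
have Q0 : (0 < Q)%R by rewrite divr_gt0.
have Q1 : (Q < 1)%R by rewrite ltr_pdivrMr // mul1r.
have Qsa : (Q * s * a = 2)%R.
  by rewrite /Q /beta; field; rewrite ?gt_eqF.
set q := (Q `^ p^-1)%R.
have q0 : (0 < q)%R by apply: powR_gt0.
have q1 : (q < 1)%R.
  have ip0 : (0 < p^-1)%R by rewrite invr_gt0.
  have := @gt0_ltr_powR _ p^-1 ip0 Q 1%R.
  by rewrite powR1 /=; apply; rewrite ?nnegrE ?ltW.
have qp : (q `^ p = Q)%R by rewrite /q -powRrM mulVf ?gt_eqF // powRr1 // ltW.
set C0 := ((2 / (1 - q)) `^ p)%R.
have C00 : (0 < C0)%R by apply: powR_gt0; rewrite divr_gt0 // subr_gt0.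
exists (C0 * (1 - s)^-1 * e)%R; split.
  by rewrite !mulr_gt0 ?invr_gt0 ?subr_gt0 // powR_gt0.
move=> d T P H K n Y H0 K0 n1 mY hyp.
set L := (trunc_log 2 n).+1.
have hnL : (n <= 2 ^ L)%N by apply: ltnW; apply: trunc_log_ltn.
have hL2 : (2 ^ L <= 2 * n)%N by rewrite /L expnS leq_mul2l /=; apply: trunc_logP.
set Z := Zf R d T Y n p C0 Q L.
have pw x i j : (i <= n)%N -> (j <= n)%N -> (`|Y j x - Y i x| `^ p <= Z x)%R.
  move=> hi hj.
  have := @pointwise R (fun u => Y (minn u n) x) L p q i j p0 q0 q1
    (leq_trans hi hnL) (leq_trans hj hnL).
  by rewrite /= (minn_idPl hi) (minn_idPl hj) qp.
have Z0 x : (0 <= Z x)%R by apply: le_trans (pw x 0%N 0%N _ _); rewrite ?powR_ge0.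
have mZ : measurable_fun setT Z.
  apply: (measurable_funM (f := cst C0)); first exact: measurable_cst.
  apply: measurable_sum => k; apply: (measurable_funM (f := cst _)).
    exact: measurable_cst.
  apply: measurable_sum => m; exact: (mFk R d T Y n p mY).
have IZ : \int[P]_x (Z x)%:E <= (C0 * (1 - s)^-1 * e *
              (H * n%:R `^ (alpha * p) + K * n%:R `^ gamma))%:E.
  apply: (le_trans (@int_Z_bound R d T P Y n p mY H K alpha b gamma C0 Q L _ _ H0 K0 _ (ltW b0) (ltW bg) hyp)).
  - exact: ltW.
  - exact: Q0.
  - by rewrite mulr_ge0 // ltW.
  rewrite lee_fin -!mulrA; apply: ler_wpM2l; first exact: ltW.
  apply: (le_trans (@final_ineq R H K Q s a e L H0 K0 Q0 (ltW s0) (ltW a0') ae Qsa)).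
  have n0 : (0 <= n%:R :> R)%R by [].
  have eL : (e ^+ L <= e * n%:R `^ (alpha * p))%R.
    rewrite /e -powR_exprn // -natrX.
    apply: (le_trans (@ge0_ler_powR _ (alpha * p) _ _ _ _ _ (_ : (2 ^ L)%:R <= (2 * n)%:R :> R)%R)).
    - by rewrite mulr_ge0 // ltW.
    - by rewrite nnegrE.
    - by rewrite nnegrE.
    - by rewrite ler_nat.
    by rewrite natrM powRM.
  have aL : (a ^+ L <= e * n%:R `^ gamma)%R.
    apply: (@le_trans _ _ (a * n%:R `^ gamma)%R); last first.
      by apply: ler_wpM2r => //; exact: powR_ge0.
    rewrite /a -powR_exprn // -natrX.
    apply: (le_trans (@ge0_ler_powR _ gamma _ _ _ _ _ (_ : (2 ^ L)%:R <= (2 * n)%:R :> R)%R)).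
    - by apply: ltW; apply: lt_trans g1.
    - by rewrite nnegrE.
    - by rewrite nnegrE.
    - by rewrite ler_nat.
    by rewrite natrM powRM.
  apply: ler_pM.
  - by apply: sumr_ge0 => k _; rewrite exprn_ge0 // ltW.
  - by rewrite addr_ge0 // mulr_ge0 // exprn_ge0 // ?(ltW a0') // powR_ge0.
  - exact: geo_le (ltW s0) s1.
  rewrite mulrDr; apply: lerD; rewrite mulrCA; apply: ler_wpM2l => //.
split.
  apply: le_trans IZ; apply: ge0_le_integral => //.
  - by move=> x _; rewrite lee_fin; apply: bigmax_ge0.
  - apply/measurable_EFinP; rewrite /maxincr_pow.
    apply: meas_bigmax => i; apply: meas_bigmax => j.
    by apply: (@meas_incr R d T Y n p mY); rewrite -ltnS ltn_ord.
  - by apply/measurable_EFinP.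
  move=> x _; rewrite lee_fin; apply: bigmax_le => // i _.
  apply: bigmax_le => // j _; apply: pw; by rewrite -ltnS ltn_ord.
move=> Y0.
apply: le_trans IZ; apply: ge0_le_integral => //.
- by move=> x _; rewrite lee_fin; apply: bigmax_ge0.
- apply/measurable_EFinP; rewrite /max_pow.
  apply: meas_bigmax => i.
  apply: (@measurableT_comp _ _ _ _ _ _ (fun r : R => (r `^ p)%R)); first exact: measurable_powR.
  apply: (@measurableT_comp _ _ _ _ _ _ (fun r : R => `|r|%R)); first exact: normr_measurable.
  by apply: mY; rewrite -ltnS ltn_ord.
- by apply/measurable_EFinP.
move=> x _; rewrite lee_fin; apply: bigmax_le => // i _.
have := pw x 0%N i (leq0n _); rewrite Y0 subr0; apply; by rewrite -ltnS ltn_ord.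
Qed.
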